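(* Let $M$ be a matroid of rank $k$ on a set $E$ with $\#E=n$, let $\mathfrak{S}\subseteq\mathcal{P}(E)$, and let $\mathfrak{S}'=\{E-S:S\in\mathfrak{S}\}$. Then (1) $\mathrm{ec}_{\mathfrak{S}}(M)=\mathrm{ec}_{\mathfrak{S}'}(M^* )$; and (2) for every $S\in\mathfrak{S}$, $a_{\mathfrak{S}}(S)$ computed in $M$ equals $b_{\mathfrak{S}'}(E-S)$ computed in $M^*$.
   Context: $M^*$ is the dual matroid (bases are complements of bases of $M$; it has rank $n-k$). For a matroid $N$ of rank $d$ on $E$ and $\mathfrak{T}\subseteq\mathcal{P}(E)$, regarded as a poset under inclusion with Möbius function $\mu_{\mathfrak{T}}$: $c(T)=\#T-\mathrm{rk}_N T$; $a_{\mathfrak{T}}(T)=c(T)-\sum_{U\in\mathfrak{T},U\subsetneq T}a_{\mathfrak{T}}(U)$ recursively (equivalently $a_{\mathfrak{T}}(S)=\sum_{T\in\mathfrak{T}}c(T)\mu_{\mathfrak{T}}(T,S)$); $b_{\mathfrak{T}}(T)=\sum_{S\in\mathfrak{T}}(d-\mathrm{rk}_N S)\mu_{\mathfrak{T}}(T,S)$; and $\mathrm{ec}_{\mathfrak{T}}(N)=\sum_{S\in\mathfrak{T}}(d-\mathrm{rk}_N S)a_{\mathfrak{T}}(S)=\sum_{T\in\mathfrak{T}}c(T)b_{\mathfrak{T}}(T)$. *)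

(* Defs.v *)
From mathcomp Require Import all_boot all_order all_algebra.
Set Implicit Arguments. Unset Strict Implicit. Unset Printing Implicit Defensive.
Import GRing.Theory Num.Theory.
Local Open Scope ring_scope.

Definition is_matroid_bases (E : finType) (Bs : {set {set E}}) : Prop :=
  Bs != set0 /\
  forall B1 B2, B1 \in Bs -> B2 \in Bs -> forall x, x \in B1 :\: B2 ->
    exists2 y, y \in B2 :\: B1 & (y |: (B1 :\ x)) \in Bs.

Definition mrank (E : finType) (Bs : {set {set E}}) (X : {set E}) : nat :=
  (\max_(B in Bs) #|X :&: B|)%N.

Definition mrk (E : finType) (Bs : {set {set E}}) : nat := mrank Bs setT.

Definition dual_bases (E : finType) (Bs : {set {set E}}) : {set {set E}} :=
  [set ~: B | B in Bs].

(* Möbius function of the poset (T, ⊆), defined by the standard recursion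
   mu(T,T) = 1, mu(T,S) = - sum_{U in T, T ⊆ U ⊊ S} mu(T,U) for T ⊊ S,
   mu(T,S) = 0 otherwise; n is fuel (enough when n > #|S|). *)
Fixpoint mobius_fuel (E : finType) (P : {set {set E}}) (n : nat)
    (T S : {set E}) : int :=
  match n with
  | 0 => 0
  | n'.+1 =>
    if T == S then 1
    else if T \proper S then
      - \sum_(U in P | (T \subset U) && (U \proper S)) mobius_fuel P n' T U
    else 0
  end.

Definition mobius (E : finType) (P : {set {set E}}) (T S : {set E}) : int :=
  mobius_fuel P #|S|.+1 T S.

Definition cN (E : finType) (Bs : {set {set E}}) (T : {set E}) : int :=
  (#|T|%:Z - (mrank Bs T)%:Z).

Definition aT (E : finType) (P : {set {set E}}) (Bs : {set {set E}})
    (S : {set E}) : int :=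
  \sum_(T in P) cN Bs T * mobius P T S.

Definition bT (E : finType) (P : {set {set E}}) (Bs : {set {set E}})
    (T : {set E}) : int :=
  \sum_(S in P) ((mrk Bs)%:Z - (mrank Bs S)%:Z) * mobius P T S.

Definition ec (E : finType) (P : {set {set E}}) (Bs : {set {set E}}) : int :=
  \sum_(S in P) ((mrk Bs)%:Z - (mrank Bs S)%:Z) * aT P Bs S.

(* Main.v *)
Require Import Defs.
From mathcomp Require Import all_boot all_order all_algebra.
Set Implicit Arguments. Unset Strict Implicit. Unset Printing Implicit Defensive.
Import GRing.Theory Num.Theory.
Local Open Scope ring_scope.

Section Mob.
Variable E : finType.
Implicit Types (Q : {set {set E}}) (T S U : {set E}).

Lemma fuel_eq Q T n : forall m S, (#|S| < n)%N -> (#|S| < m)%N ->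
  mobius_fuel Q n T S = mobius_fuel Q m T S.
Proof.
elim: n => [|n IH] [|m] S //= Hn Hm.
case: (T == S) => //; case: (T \proper S) => //.
congr (- _); apply: eq_bigr => U /andP[_ /andP[_ HU]].
have := proper_card HU => h.
apply: IH; apply: leq_trans h _; by [].
Qed.

Lemma mobius_rec Q T S : mobius Q T S =
  if T == S then 1 else if T \proper S then
  - \sum_(U in Q | (T \subset U) && (U \proper S)) mobius Q T U else 0.
Proof.
rewrite {1}/mobius /=.
case: (T == S) => //; case: (T \proper S) => //.
congr (- _); apply: eq_bigr => U /andP[_ /andP[_ HU]].
rewrite /mobius; apply: fuel_eq => //; exact: leq_trans (proper_card HU) _.
Qed.

Lemma mobius0 Q T S : ~~ (T \subset S) -> mobius Q T S = 0.
Proof.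
move=> h; rewrite mobius_rec.
have -> : (T == S) = false by apply/negP => /eqP e; rewrite e subxx in h.
by rewrite (negbTE (contra (@proper_sub _ _ _) h)).
Qed.

Lemma mobiusL Q T S : S \in Q ->
  \sum_(U in Q | (T \subset U) && (U \subset S)) mobius Q T U = (T == S)%:R.
Proof.
move=> SQ.
case: (boolP (T \subset S)) => TS; last first.
  rewrite big1; last by move=> U /andP[_ /andP[h1 h2]]; rewrite (subset_trans h1 h2) in TS.
  by case: eqP TS => // ->; rewrite subxx.
rewrite (bigD1 S) /=; last by rewrite SQ TS subxx.
rewrite (mobius_rec Q T S).
have E1 : forall U, ((U \in Q) && ((T \subset U) && (U \subset S))) && (U != S)
   = (U \in Q) && ((T \subset U) && (U \proper S)).
  by move=> U; rewrite properEneq; case: (U \in Q); case: (T \subset U); case: (U \subset S); case: (U != S).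
rewrite (eq_bigl _ _ E1).
case: eqP => [eTS|nTS].
  subst T; rewrite big1 ?addr0 //.
  by move=> U /andP[_ /andP[h1 h2]]; move: (proper_sub_trans h2 h1); rewrite properxx.
have -> : T \proper S by rewrite properEneq TS andbT; apply/eqP.
by rewrite addNr.
Qed.


Lemma sum_imC (P : {set {set E}}) (c : {set E} -> bool) (F : {set E} -> int) :
  \sum_(X in [set ~: S | S in P] | c X) F X = \sum_(S in P | c (~: S)) F (~: S).
Proof.
rewrite big_mkcondr big_imset /=; last by move=> x y _ _; apply: setC_inj.
by rewrite -big_mkcondr.
Qed.

Lemma pickR (P : {set {set E}}) (F : {set E} -> int) T S : S \in P ->
  \sum_(V in P | (T \subset V) && (V \subset S)) F V * (V == S)%:R =
  if T \subset S then F S else 0.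
Proof.
move=> SP; case: (boolP (T \subset S)) => TS; last first.
  by rewrite big1 // => U /andP[_ /andP[h1 h2]]; rewrite (subset_trans h1 h2) in TS.
rewrite (bigD1 S) /=; last by rewrite SP TS subxx.
by rewrite eqxx mulr1 big1 ?addr0 // => V /andP[_ /negbTE ->]; rewrite mulr0.
Qed.

Lemma pickL (P : {set {set E}}) (F : {set E} -> int) T S : T \in P ->
  \sum_(V in P | (T \subset V) && (V \subset S)) F V * (T == V)%:R =
  if T \subset S then F T else 0.
Proof.
move=> TP; case: (boolP (T \subset S)) => TS; last first.
  by rewrite big1 // => U /andP[_ /andP[h1 h2]]; rewrite (subset_trans h1 h2) in TS.
rewrite (bigD1 T) /=; last by rewrite TP TS subxx.
by rewrite eqxx mulr1 big1 ?addr0 // => V /andP[_ ]; rewrite eq_sym => /negbTE ->; rewrite mulr0.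
Qed.

Lemma mobius_dual (P : {set {set E}}) T S : T \in P -> S \in P ->
  mobius [set ~: X | X in P] (~: S) (~: T) = mobius P T S.
Proof.
move=> TP SP.
set P' := [set ~: X | X in P].
set nu := fun U S => mobius P' (~: S) (~: U).
have R : forall T S, T \in P ->
    \sum_(U in P | (T \subset U) && (U \subset S)) nu U S = (T == S)%:R.
  move=> T0 S0 T0P.
  have := mobiusL (~: S0) (imset_f (fun X => ~: X) T0P).
  rewrite sum_imC (inj_eq (@setC_inj _)) eq_sym => <-.
  apply: eq_bigl => U.
  by rewrite !setCS; case: (U \in P) => //=; rewrite andbC.
case: (boolP (T \subset S)) => TS; last first.
  by rewrite !mobius0 // setCS.
pose D := \sum_(V in P | (T \subset V) && (V \subset S))
           \sum_(U in P | (V \subset U) && (U \subset S)) mobius P T V * nu U S.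
have D1 : D = mobius P T S.
  have := pickR (mobius P T) T SP; rewrite TS => <-.
  rewrite /D; apply: eq_bigr => V /andP[VP _].
  by rewrite -mulr_sumr R.
have D2 : D = nu T S.
  have := pickL (nu^~ S) S TP; rewrite TS => <-.
  rewrite /D.
  rewrite (exchange_big_dep (fun U => (U \in P) && ((T \subset U) && (U \subset S)))) /=; last first.
    by move=> V U /andP[_ /andP[h1 _]] /andP[UP /andP[h2 h3]]; rewrite UP h3 (subset_trans h1 h2).
  apply: eq_bigr => U /andP[UP /andP[TU US]].
  rewrite -(mobiusL T UP) mulr_sumr; apply: eq_big => [V|V _]; last exact: mulrC.
  rewrite UP US /= andbT.
  case: (V \in P) => //=; case: (boolP (T \subset V)) => //= TV.
  case: (boolP (V \subset U)) => //= VU; [by rewrite (subset_trans VU US) | by rewrite andbF].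
by rewrite -D1 D2.
Qed.

End Mob.
Local Close Scope ring_scope.

Lemma bases_card (E : finType) (Bs : {set {set E}}) : is_matroid_bases Bs ->
  forall B1 B2, B1 \in Bs -> B2 \in Bs -> #|B1| = #|B2|.
Proof.
move=> [_ ex].
suff H : forall m B1 B2, #|B1 :\: B2| = m -> B1 \in Bs -> B2 \in Bs -> #|B1| = #|B2|.
  by move=> B1 B2; apply: H.
elim=> [|m IH] B1 B2 Hm B1s B2s.
  have : B1 :\: B2 == set0 by rewrite -cards_eq0 Hm.
  rewrite setD_eq0 => S12.
  case: (set_0Vmem (B2 :\: B1)) => [|[y Hy]].
    move=> e21; have : B2 :\: B1 == set0 by rewrite e21.
    rewrite setD_eq0 => S21; suff -> : B1 = B2 by [].
    by apply/eqP; rewrite eqEsubset S12 S21.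
  have [z] := ex _ _ B2s B1s y Hy.
  have : B1 :\: B2 == set0 by rewrite -cards_eq0 Hm.
  by move/eqP => ->; rewrite inE.
have : 0 < #|B1 :\: B2| by rewrite Hm.
rewrite card_gt0 => /set0Pn [x Hx].
have [y Hy B1s'] := ex _ _ B1s B2s x Hx.
move: Hx Hy; rewrite !inE => /andP[xB2 xB1] /andP[yB1 yB2].
have e : (y |: (B1 :\ x)) :\: B2 = (B1 :\: B2) :\ x.
  apply/setP => z; rewrite !inE.
  case: (z =P y) => [->|_]; first by rewrite yB2 (negbTE yB1) !andbF.
  by case: (z \in B2); case: (z != x); case: (z \in B1).
rewrite -(IH _ B2 _ B1s' B2s).
  rewrite cardsU1 !inE (negbTE yB1) andbF /= (cardsD1 x B1) xB1.
  by rewrite add1n.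
apply/eqP; rewrite e; rewrite -(eqn_add2l 1) !add1n -Hm.
by rewrite (cardsD1 x (B1 :\: B2)) !inE xB1 xB2.
Qed.

Lemma max_shift (I : finType) (A : {pred I}) (F G : I -> nat) k c :
  0 < #|A| -> (forall i, i \in A -> F i + k = G i + c) ->
  \max_(i in A) F i + k = \max_(i in A) G i + c.
Proof.
move=> A0 h; apply/eqP; rewrite eqn_leq; apply/andP; split.
  have [i0 Ai0 ->] := eq_bigmax_cond F A0.
  by rewrite h // leq_add2r; apply: leq_bigmax_cond.
have [i0 Ai0 ->] := eq_bigmax_cond G A0.
by rewrite -h // leq_add2r; apply: leq_bigmax_cond.
Qed.

From mathcomp Require Import zify.

Lemma mrank_dual (E : finType) (Bs : {set {set E}}) k :
  0 < #|Bs| -> (forall B, B \in Bs -> #|B| = k) ->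
  forall X, (mrank (dual_bases Bs) X + k = #|X| + mrank Bs (~: X))%N.
Proof.
move=> Bs0 hk X; rewrite /mrank /dual_bases big_imset /=; last by move=> x y _ _; apply: setC_inj.
rewrite [RHS]addnC; apply: max_shift => // B BB.
rewrite -(hk B BB).
have h1 := cardsID X B. have h2 := cardsID B X.
rewrite -setDE (setIC (~: X)) -setDE.
rewrite setIC in h1. lia.
Qed.

Theorem proposition6p2 (E : finType) (Bs : {set {set E}}) (P : {set {set E}}) :
  is_matroid_bases Bs ->
  let P' := [set ~: S | S in P] in
  ec P Bs = ec P' (dual_bases Bs) /\
  (forall S, S \in P -> aT P Bs S = bT P' (dual_bases Bs) (~: S)).
Proof.
move=> HM P'.
have [B0 B0s] : exists B0, B0 \in Bs.
  by case: HM => /set0Pn [B0 h] _; exists B0.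
set k := #|B0|.
have hk : forall B, B \in Bs -> #|B| = k by move=> B BB; exact: (bases_card HM BB B0s).
have Bs0 : 0 < #|Bs| by rewrite card_gt0; apply/set0Pn; exists B0.
have hd := mrank_dual Bs0 hk.
have mrk0 : mrk Bs = k.
  have e : (\max_(B in Bs) #|setT :&: B| + 0 = \max_(B in Bs) 0 + k)%N.
    by apply: max_shift => // B BB; rewrite setTI hk // addn0.
  by rewrite big1_eq addn0 add0n in e.
have mrkd : (mrk (dual_bases Bs) + k = #|E|)%N.
  rewrite /mrk hd setCT cardsT /mrank big1 ?addn0 // => B1 _.
  by rewrite set0I cards0.
have hC : forall X : {set E}, (#|X| + #|~: X| = #|E|)%N.
  by move=> X; rewrite cardsC.
have sumC : forall F : {set E} -> int,
   (\sum_(X in P') F X = \sum_(S in P) F (~: S))%R.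
  by move=> F; rewrite big_imset //= => x y _ _; apply: setC_inj.
have cNd : forall T, cN (dual_bases Bs) (~: T) = (k%:Z - (mrank Bs T)%:Z)%R.
  move=> T; rewrite /cN; have := hd (~: T); have := hC T; rewrite setCK; lia.
have dS : forall S, ((mrk (dual_bases Bs))%:Z - (mrank (dual_bases Bs) (~: S))%:Z)%R
                     = cN Bs S.
  move=> S; rewrite /cN; have := hd (~: S); have := hC S; rewrite setCK; lia.
split; last first.
  move=> S SP; rewrite /bT sumC /aT; apply: eq_bigr => T TP.
  rewrite mobius_dual //; congr (_ * _)%R; exact/esym/dS.
rewrite /ec sumC.
transitivity (\sum_(S in P) \sum_(T in P)
    (cN Bs S * ((k%:Z - (mrank Bs T)%:Z) * mobius P S T)))%R; last first.
  apply: eq_bigr => S SP; rewrite /aT sumC -mulr_sumr.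
  apply: (congr2 (fun a b => a * b)%R); first exact/esym/dS.
  apply: eq_bigr => T TP; rewrite cNd mobius_dual //.
rewrite mrk0.
under eq_bigr => S SP do rewrite /aT mulr_sumr.
rewrite exchange_big /=; apply: eq_bigr => S SP; apply: eq_bigr => T TP.
by rewrite mulrCA.
Qed.
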